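(* Let $a,b,c$ be positive numbers with $a<b<c$ and $b-a<c_0<a$, where $c_0=c-\lfloor c/b\rfloor b$. Then: (i) $R_{a,b,c}\mathcal D_{a,b,c}=\tilde R_{a,b,c}\mathcal D_{a,b,c}=\mathcal D_{a,b,c}$ and $R_{a,b,c}\mathcal S_{a,b,c}=\tilde R_{a,b,c}\mathcal S_{a,b,c}=\mathcal S_{a,b,c}$; (ii) $R_{a,b,c}(\tilde R_{a,b,c}(t))=\tilde R_{a,b,c}(R_{a,b,c}(t))=t$ for all $t\in\mathcal S_{a,b,c}$ (in particular for all $t\in\mathcal D_{a,b,c}$); (iii) $|R_{a,b,c}(E)|=|\tilde R_{a,b,c}(E)|=|E|$ for every Lebesgue measurable set $E\subset\mathcal S_{a,b,c}$ (in particular for every measurable $E\subset\mathcal D_{a,b,c}$), where $|\cdot|$ is Lebesgue measure.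
   Context: For $a,b,c>0$ and $t\in\mathbb R$, $\mathbf M_{a,b,c}(t)=(\chi_{[0,c)}(t-\mu+\lambda))_{\mu\in a\mathbb Z,\lambda\in b\mathbb Z}$ is the infinite matrix with rows indexed by $a\mathbb Z$ and columns by $b\mathbb Z$, acting by $(\mathbf M_{a,b,c}(t)\mathbf x)(\mu)=\sum_{\lambda\in b\mathbb Z}\chi_{[0,c)}(t-\mu+\lambda)\mathbf x(\lambda)$. $\mathcal B_b$ is the set of vectors $(\mathbf x(\lambda))_{\lambda\in b\mathbb Z}$ with entries in $\{0,1\}$, and $\mathcal B_b^0=\{\mathbf x\in\mathcal B_b:\mathbf x(0)=1\}$. $\mathbf 1,\mathbf 2$ denote the vectors indexed by $a\mathbb Z$ with all entries $1$, resp. $2$. $\mathcal D_{a,b,c}=\{t:\mathbf M_{a,b,c}(t)\mathbf x=\mathbf 2\text{ for some }\mathbf x\in\mathcal B_b^0\}$, $\mathcal S_{a,b,c}=\{t:\mathbf M_{a,b,c}(t)\mathbf x=\mathbf 1\text{ for some }\mathbf x\in\mathcal B_b^0\}$. With $c_0=c-\lfloor c/b\rfloor b$ and $b-a<c_0<a$, the piecewise linear maps $R_{a,b,c},\tilde R_{a,b,c}:\mathbb R\to\mathbb R$ are: $R_{a,b,c}(t)=t+\lfloor c/b\rfloor b+b$ if $t\in[0,c_0+a-b)+a\mathbb Z$, $R_{a,b,c}(t)=t$ if $t\in[c_0+a-b,c_0)+a\mathbb Z$, $R_{a,b,c}(t)=t+\lfloor c/b\rfloor b$ if $t\in[c_0,a)+a\mathbb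 Z$; $\tilde R_{a,b,c}(t)=t-\lfloor c/b\rfloor b$ if $t\in[c-a,c-c_0)+a\mathbb Z$, $\tilde R_{a,b,c}(t)=t$ if $t\in[c-c_0,c-c_0+b-a)+a\mathbb Z$, $\tilde R_{a,b,c}(t)=t-\lfloor c/b\rfloor b-b$ if $t\in[c-c_0+b-a,c)+a\mathbb Z$. Here $A+a\mathbb Z=\{x+ak:x\in A,k\in\mathbb Z\}$. *)

(* Defs.v *)
From Stdlib Require Import Reals Lra ZArith ClassicalEpsilon.
Open Scope R_scope.

Definition chi (c s : R) : R :=
  if Rle_dec 0 s then (if Rlt_dec s c then 1 else 0) else 0.

(* 0/1 entry of a vector x in B_b ; x k is the entry at lambda = k*b *)
Definition bit (x : Z -> bool) (k : Z) : R := if x k then 1 else 0.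

(* Symmetric partial sum over lambda = k b, k in [-N, N], of row mu = m a of
   M_{a,b,c}(t) x *)
Definition row_partial (a b c t : R) (x : Z -> bool) (m : Z) (N : nat) : R :=
  sum_f_R0 (fun i => let k := (Z.of_nat i - Z.of_nat N)%Z in
              chi c (t - IZR m * a + IZR k * b) * bit x k) (2 * N).

(* (M_{a,b,c}(t) x)(m a) = v  (the series has finitely many nonzero terms) *)
Definition row_eq (a b c t : R) (x : Z -> bool) (m : Z) (v : R) : Prop :=
  Un_cv (row_partial a b c t x m) v.

(* M_{a,b,c}(t) x = v * 1 for some x in B_b^0 *)
Definition solvable (a b c t v : R) : Prop :=
  exists x : Z -> bool, x 0%Z = true /\ forall m : Z, row_eq a b c t x m v.

Definition Dset (a b c : R) : R -> Prop := fun t => solvable a b c t 2.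
Definition Sset (a b c : R) : R -> Prop := fun t => solvable a b c t 1.

Definition nfl (b c : R) : R := IZR (Int_part (c / b)).
Definition c0 (b c : R) : R := c - nfl b c * b.

Definition in_per (a u v t : R) : Prop := exists k : Z, u <= t - IZR k * a < v.

Definition Rmap (a b c : R) (t : R) : R :=
  if excluded_middle_informative (in_per a 0 (c0 b c + a - b) t)
  then t + nfl b c * b + b
  else if excluded_middle_informative (in_per a (c0 b c + a - b) (c0 b c) t)
  then t
  else t + nfl b c * b.

Definition Rtmap (a b c : R) (t : R) : R :=
  if excluded_middle_informative (in_per a (c - a) (c - c0 b c) t)
  then t - nfl b c * b
  else if excluded_middle_informative (in_per a (c - c0 b c) (c - c0 b c + b - a) t)
  then t
  else t - nfl b c * b - b.

Definition image (f : R -> R) (E : R -> Prop) : R -> Prop :=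
  fun y => exists x, E x /\ f x = y.

Definition set_eq (A B : R -> Prop) : Prop := forall t, A t <-> B t.

(* Lebesgue outer measure: lm_le E x  <->  |E|* <= x  (x real).
   |E|* = inf of sum of lengths of countable covers of E by closed intervals. *)
Definition lm_le (E : R -> Prop) (x : R) : Prop :=
  forall eps, 0 < eps ->
    exists l r : nat -> R,
      (forall n, l n <= r n) /\
      (forall t, E t -> exists n, l n <= t <= r n) /\
      (forall N, sum_f_R0 (fun n => r n - l n) N <= x + eps).

(* equality of Lebesgue outer measures as elements of [0, +oo] *)
Definition lm_eq (A B : R -> Prop) : Prop := forall x, lm_le A x <-> lm_le B x.

Definition lmeasurable (E : R -> Prop) : Prop :=
  forall (A : R -> Prop) x y,
    lm_le (fun t => A t /\ E t) x -> lm_le (fun t => A t /\ ~ E t) y ->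
    lm_le A (x + y).

(* Main.v *)
Require Import Defs.
From Stdlib Require Import Reals Lra Lia ZArith List Arith Permutation ClassicalEpsilon.
From Stdlib Require Cantor.
Open Scope R_scope.

Fixpoint zs (f : Z -> R) (p : Z) (L : nat) : R :=
  match L with O => 0 | S L' => zs f p L' + f (p + Z.of_nat L')%Z end.

Lemma zs_ext f g p L : (forall k, (p <= k < p + Z.of_nat L)%Z -> f k = g k) ->
  zs f p L = zs g p L.
Proof.
  induction L; intros H; simpl; [reflexivity|].
  rewrite IHL; [f_equal; apply H; lia|intros; apply H; lia].
Qed.

Lemma zs_shift f j p L : zs (fun k => f (k + j)%Z) p L = zs f (p + j) L.
Proof.
  induction L; simpl; [reflexivity|]. rewrite IHL; f_equal; f_equal; lia.
Qed.

Lemma zs_app f p L1 L2 : zs f p (L1 + L2) = zs f p L1 + zs f (p + Z.of_nat L1) L2.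
Proof.
  induction L2; simpl.
  - rewrite Nat.add_0_r; ring.
  - rewrite Nat.add_succ_r; simpl. rewrite IHL2.
    replace (p + Z.of_nat (L1 + L2))%Z with (p + Z.of_nat L1 + Z.of_nat L2)%Z by lia. ring.
Qed.

Lemma zs_zero f p L : (forall k, (p <= k < p + Z.of_nat L)%Z -> f k = 0) -> zs f p L = 0.
Proof.
  induction L; intros H; simpl; [reflexivity|].
  rewrite IHL; [rewrite H; [ring|lia]|intros; apply H; lia].
Qed.

Lemma zs_Sl f p L : zs f p (S L) = f p + zs f (p + 1) L.
Proof.
  induction L.
  - simpl. rewrite Z.add_0_r. ring.
  - change (zs f p (S (S L))) with (zs f p (S L) + f (p + Z.of_nat (S L))%Z).
    rewrite IHL. change (zs f (p+1) (S L)) with (zs f (p+1) L + f (p + 1 + Z.of_nat L)%Z).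
    replace (p + Z.of_nat (S L))%Z with (p + 1 + Z.of_nat L)%Z by lia. ring.
Qed.

Lemma zs_window f A K p L :
  (forall k, f k <> 0 -> (p <= k < p + Z.of_nat L)%Z) ->
  (A <= p)%Z -> (p + Z.of_nat L <= A + Z.of_nat K)%Z ->
  zs f A K = zs f p L.
Proof.
  intros Hs H1 H2.
  set (d1 := Z.to_nat (p - A)).
  set (d2 := (K - d1 - L)%nat).
  assert (HK : K = (d1 + (L + d2))%nat) by (unfold d2, d1; lia).
  rewrite HK, zs_app, zs_app.
  assert (Hp : (A + Z.of_nat d1 = p)%Z) by (unfold d1; lia).
  rewrite Hp.
  rewrite (zs_zero f A d1), (zs_zero f (p + Z.of_nat L) d2); [ring| |].
  - intros k Hk. destruct (Req_dec (f k) 0) as [e|e]; auto. apply Hs in e. lia.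
  - intros k Hk. destruct (Req_dec (f k) 0) as [e|e]; auto. apply Hs in e. lia.
Qed.

Lemma zs_limit f p L j :
  (forall k, f k <> 0 -> (p <= k < p + Z.of_nat L)%Z) ->
  Un_cv (fun N => zs f (- Z.of_nat N + j) (S (2 * N))) (zs f p L).
Proof.
  intros Hs eps Heps.
  exists (Z.to_nat (Z.abs p + Z.abs j + Z.of_nat L)).
  intros N HN. unfold Rdist. rewrite (zs_window f _ _ p L); auto; try lia.
  unfold Rminus. rewrite Rplus_opp_r, Rabs_R0. exact Heps.
Qed.

Definition term (a b c t : R) (x : Z -> bool) (m : Z) (k : Z) : R :=
  chi c (t - IZR m * a + IZR k * b) * bit x k.

Lemma sum_zs (g : Z -> R) (N K : nat) :
  sum_f_R0 (fun i => g (Z.of_nat i - Z.of_nat N)%Z) K = zs g (- Z.of_nat N) (S K).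
Proof.
  induction K.
  - simpl sum_f_R0. cbn [zs]. rewrite Rplus_0_l. f_equal. lia.
  - rewrite tech5, IHK.
    transitivity (zs g (- Z.of_nat N) (S K) + g (- Z.of_nat N + Z.of_nat (S K))%Z); [|reflexivity].
    replace (Z.of_nat (S K) - Z.of_nat N)%Z with (- Z.of_nat N + Z.of_nat (S K))%Z by lia. reflexivity.
Qed.

Lemma row_partial_zs a b c t x m N :
  row_partial a b c t x m N = zs (term a b c t x m) (- Z.of_nat N + 0) (S (2 * N)).
Proof.
  unfold row_partial. rewrite Z.add_0_r. apply (sum_zs (term a b c t x m)).
Qed.

Lemma Un_cv_ext u w l : (forall n, u n = w n) -> Un_cv u l -> Un_cv w l.
Proof. intros H Hu eps He. destruct (Hu eps He) as [N HN]. exists N. intros n Hn.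
  rewrite <- H. auto. Qed.

Lemma chi_nz c y : chi c y <> 0 -> 0 <= y < c.
Proof. unfold chi. destruct (Rle_dec 0 y); destruct (Rlt_dec y c); intros H; try lra; auto. Qed.

Lemma term_support a b c t x m : 0 < b -> exists p L,
  forall k, term a b c t x m k <> 0 -> (p <= k < p + Z.of_nat L)%Z.
Proof.
  intros Hb. set (s := t - IZR m * a).
  exists (Int_part (- s / b)), (Z.to_nat (Int_part ((c - s) / b) + 1 - Int_part (- s / b))).
  intros k Hk. unfold term in Hk.
  assert (Hc : chi c (t - IZR m * a + IZR k * b) <> 0) by (intro e; apply Hk; rewrite e; ring).
  apply chi_nz in Hc. fold s in Hc.
  destruct (base_Int_part (- s / b)) as [H1 H2].
  destruct (base_Int_part ((c - s) / b)) as [H3 H4].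
  assert (E1 : - s / b <= IZR k).
  { apply (Rmult_le_reg_r b); [lra|]. replace (- s / b * b) with (- s) by (field; lra). lra. }
  assert (E2 : IZR k < (c - s) / b).
  { apply (Rmult_lt_reg_r b); [lra|]. replace ((c - s) / b * b) with (c - s) by (field; lra). lra. }
  assert (Z1 : (Int_part (- s / b) <= k)%Z) by (apply le_IZR; lra).
  assert (Z2 : (k < Int_part ((c - s) / b) + 1)%Z) by (apply lt_IZR; rewrite plus_IZR; simpl; lra).
  lia.
Qed.

Lemma row_val a b c t x m v p L : row_eq a b c t x m v ->
  (forall k, term a b c t x m k <> 0 -> (p <= k < p + Z.of_nat L)%Z) ->
  zs (term a b c t x m) p L = v.
Proof.
  intros Hr Hs. unfold row_eq in Hr.
  apply (UL_sequence (row_partial a b c t x m)); auto.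
  apply (Un_cv_ext (fun N => zs (term a b c t x m) (- Z.of_nat N + 0) (S (2 * N)))).
  - intros; symmetry; apply row_partial_zs.
  - apply zs_limit; auto.
Qed.

Definition sol (a b c v t : R) (x : Z -> bool) : Prop :=
  x 0%Z = true /\ forall m, row_eq a b c t x m v.

Lemma sol_solvable a b c v t : solvable a b c t v <-> exists x, sol a b c v t x.
Proof. unfold solvable, sol. tauto. Qed.

Lemma sol_shift a b c v t x j : 0 < b -> sol a b c v t x -> x j = true ->
  sol a b c v (t + IZR j * b) (fun k => x (k + j)%Z).
Proof.
  intros Hb [H0 Hr] Hj. split; [simpl; exact Hj|].
  intros m. destruct (term_support a b c t x m Hb) as [p [L Hs]].
  pose proof (row_val _ _ _ _ _ _ _ _ _ (Hr m) Hs) as Hv.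
  unfold row_eq. rewrite <- Hv.
  apply (Un_cv_ext (fun N => zs (term a b c t x m) (- Z.of_nat N + j) (S (2 * N)))).
  - intros N. rewrite row_partial_zs. rewrite <- zs_shift.
    rewrite Z.add_0_r. apply zs_ext. intros k _. unfold term, bit.
    f_equal. f_equal. rewrite plus_IZR. ring.
  - apply zs_limit; auto.
Qed.

Lemma IZR_mono_b (k q : Z) (b : R) : 0 < b -> (k <= q)%Z -> IZR k * b <= IZR q * b.
Proof. intros Hb H. apply Rmult_le_compat_r; [lra|]. apply IZR_le; auto. Qed.

Lemma rowwin a b c t x m v p L : row_eq a b c t x m v -> 0 < b ->
  0 <= t - IZR m * a + IZR p * b ->
  t - IZR m * a + (IZR p - 1) * b < 0 ->
  t - IZR m * a + (IZR p + INR L - 1) * b < c ->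
  c <= t - IZR m * a + (IZR p + INR L) * b ->
  zs (bit x) p L = v.
Proof.
  intros Hr Hb H1 H2 H3 H4.
  set (s := t - IZR m * a) in *.
  assert (Hin : forall k, (p <= k < p + Z.of_nat L)%Z -> chi c (s + IZR k * b) = 1).
  { intros k Hk. assert (A1 := IZR_mono_b p k b Hb ltac:(lia)).
    assert (A2 := IZR_mono_b k (p + Z.of_nat L - 1) b Hb ltac:(lia)).
    rewrite minus_IZR, plus_IZR, <- INR_IZR_INZ in A2.
    unfold chi. destruct (Rle_dec 0 (s + IZR k * b)); [|lra].
    destruct (Rlt_dec (s + IZR k * b) c); [reflexivity|lra]. }
  assert (Hout : forall k, ~ (p <= k < p + Z.of_nat L)%Z -> chi c (s + IZR k * b) = 0).
  { intros k Hk. unfold chi. destruct (Rle_dec 0 (s + IZR k * b)) as [e|e]; [|reflexivity].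
    destruct (Rlt_dec (s + IZR k * b) c) as [f|f]; [|reflexivity].
    exfalso. destruct (Z_lt_le_dec k p).
    - assert (A := IZR_mono_b k (p - 1) b Hb ltac:(lia)). rewrite minus_IZR in A. lra.
    - assert (A := IZR_mono_b (p + Z.of_nat L) k b Hb ltac:(lia)).
      rewrite plus_IZR, <- INR_IZR_INZ in A. lra. }
  rewrite <- (row_val a b c t x m v p L Hr).
  - apply zs_ext. intros k Hk. unfold term. fold s. rewrite Hin; auto. ring.
  - intros k Hk. unfold term in Hk. fold s in Hk.
    destruct (Z_le_dec p k); destruct (Z_lt_le_dec k (p + Z.of_nat L)); try lia;
    exfalso; apply Hk; rewrite Hout; try lia; ring.
Qed.

Lemma bit_true x k : bit x k = 1 -> x k = true.
Proof. unfold bit. destruct (x k); auto. lra. Qed.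

Lemma bit_one x k : x k = true -> bit x k = 1.
Proof. unfold bit. intros ->. reflexivity. Qed.

Lemma zs_Sr f p L : zs f p (S L) = zs f p L + f (p + Z.of_nat L)%Z.
Proof. reflexivity. Qed.

Lemma N_facts b c : 0 < b -> b < c -> (1 <= Int_part (c / b))%Z.
Proof.
  intros Hb Hc. destruct (base_Int_part (c / b)) as [_ H].
  assert (1 < c / b).
  { apply (Rmult_lt_reg_r b); [lra|]. replace (c / b * b) with c by (field; lra). lra. }
  assert (0 < IZR (Int_part (c / b))) by lra.
  apply lt_IZR in H1. lia.
Qed.

Definition hyp (a b c : R) : Prop :=
  0 < a /\ a < b /\ b < c /\ b - a < c0 b c /\ c0 b c < a.

Ltac prep H a b c :=
  let Ha := fresh "Ha" in let Hab := fresh "Hab" in let Hbc := fresh "Hbc" in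
  let H1 := fresh "Hc1" in let H2 := fresh "Hc2" in let HN := fresh "HN" in
  let Hn := fresh "Hn" in let HnZ := fresh "HnZ" in
  destruct H as [Ha [Hab [Hbc [H1 H2]]]];
  unfold c0, nfl in *;
  assert (HN : (1 <= Int_part (c / b))%Z) by (apply N_facts; lra);
  set (N := Int_part (c / b)) in *;
  set (n := Z.to_nat N);
  assert (HnZ : Z.of_nat n = N) by (unfold n; lia);
  assert (Hn : INR n = IZR N) by (rewrite INR_IZR_INZ, HnZ; reflexivity).

Ltac solve_ineq := repeat (rewrite plus_IZR || rewrite minus_IZR || rewrite opp_IZR); rewrite ?S_INR; match goal with H : INR _ = _ |- _ => rewrite ?H end; lra.

Lemma case_R1 a b c v t x k : hyp a b c -> sol a b c v t x ->
  0 <= t - IZR k * a < c0 b c + a - b -> x (Int_part (c / b) + 1)%Z = true.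
Proof.
  intros H [H0 Hr] Ht. prep H a b c.
  assert (A : zs (bit x) 0 (S n) = v) by (apply (rowwin a b c t x k); auto; [lra|..]; solve_ineq).
  assert (B : zs (bit x) 1 (S n) = v) by (apply (rowwin a b c t x (k + 1)); auto; [lra|..]; solve_ineq).
  rewrite zs_Sl, ?Z.add_0_l in A. rewrite zs_Sr in B. rewrite bit_one in A by auto.
  apply bit_true. rewrite HnZ in B. replace (N + 1)%Z with (1 + N)%Z by lia. lra.
Qed.

Lemma case_R2 a b c v t x k : hyp a b c -> sol a b c v t x ->
  c0 b c + a - b <= t - IZR k * a < c0 b c -> False.
Proof.
  intros H [H0 Hr] Ht. prep H a b c.
  assert (A : zs (bit x) 0 (S n) = v) by (apply (rowwin a b c t x k); auto; [lra|..]; solve_ineq).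
  assert (B : zs (bit x) 1 n = v) by (apply (rowwin a b c t x (k + 1)); auto; [lra|..]; solve_ineq).
  rewrite zs_Sl, ?Z.add_0_l in A. rewrite bit_one in A by auto. lra.
Qed.

Lemma case_R3 a b c v t x k : hyp a b c -> sol a b c v t x ->
  c0 b c <= t - IZR k * a < a -> x (Int_part (c / b)) = true.
Proof.
  intros H [H0 Hr] Ht. prep H a b c.
  assert (A : zs (bit x) 0 n = v) by (apply (rowwin a b c t x k); auto; [lra|..]; solve_ineq).
  assert (B : zs (bit x) 1 n = v) by (apply (rowwin a b c t x (k + 1)); auto; [lra|..]; solve_ineq).
  destruct n as [|n'] eqn:En; [simpl in HnZ; lia|].
  rewrite zs_Sl, ?Z.add_0_l in A. rewrite zs_Sr in B. rewrite bit_one in A by auto.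
  apply bit_true. replace N with (1 + Z.of_nat n')%Z by (rewrite <- HnZ; lia). lra.
Qed.

Lemma case_T1 a b c v t x k : hyp a b c -> sol a b c v t x ->
  c - a <= t - IZR k * a < c - c0 b c -> x (- Int_part (c / b))%Z = true.
Proof.
  intros H [H0 Hr] Ht. prep H a b c.
  assert (A : zs (bit x) (1 - N) n = v) by (apply (rowwin a b c t x k); auto; [lra|..]; solve_ineq).
  assert (B : zs (bit x) (- N) n = v) by (apply (rowwin a b c t x (k - 1)); auto; [lra|..]; solve_ineq).
  destruct n as [|n'] eqn:En; [simpl in HnZ; lia|].
  rewrite zs_Sr in A. rewrite zs_Sl in B.
  replace (1 - N + Z.of_nat n')%Z with 0%Z in A by (rewrite <- HnZ; lia).
  replace (- N + 1)%Z with (1 - N)%Z in B by lia.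
  rewrite bit_one in A by auto. apply bit_true. lra.
Qed.

Lemma case_T2 a b c v t x k : hyp a b c -> sol a b c v t x ->
  c - c0 b c <= t - IZR k * a < c - c0 b c + b - a -> False.
Proof.
  intros H [H0 Hr] Ht. prep H a b c.
  assert (A : zs (bit x) (- N) (S n) = v) by (apply (rowwin a b c t x k); auto; [lra|..]; solve_ineq).
  assert (B : zs (bit x) (- N) n = v) by (apply (rowwin a b c t x (k - 1)); auto; [lra|..]; solve_ineq).
  rewrite zs_Sr in A. replace (- N + Z.of_nat n)%Z with 0%Z in A by lia.
  rewrite bit_one in A by auto. lra.
Qed.

Lemma case_T3 a b c v t x k : hyp a b c -> sol a b c v t x ->
  c - c0 b c + b - a <= t - IZR k * a < c -> x (- (Int_part (c / b) + 1))%Z = true.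
Proof.
  intros H [H0 Hr] Ht. prep H a b c.
  assert (A : zs (bit x) (- N) (S n) = v) by (apply (rowwin a b c t x k); auto; [lra|..]; solve_ineq).
  assert (B : zs (bit x) (- (N + 1)) (S n) = v) by (apply (rowwin a b c t x (k - 1)); auto; [lra|..]; solve_ineq).
  rewrite zs_Sr in A. replace (- N + Z.of_nat n)%Z with 0%Z in A by lia.
  rewrite zs_Sl in B. replace (- (N + 1) + 1)%Z with (- N)%Z in B by lia.
  rewrite bit_one in A by auto. apply bit_true. lra.
Qed.

Lemma exists_period a w t : 0 < a -> exists k, w <= t - IZR k * a < w + a.
Proof.
  intros Ha. exists (Int_part ((t - w) / a)).
  destruct (base_Int_part ((t - w) / a)) as [H1 H2].
  set (K := IZR (Int_part ((t - w) / a))) in *.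
  assert (E : (t - w) / a * a = t - w) by (field; lra).
  split.
  - assert (K * a <= (t - w) / a * a) by (apply Rmult_le_compat_r; lra). lra.
  - assert ((t - w) / a * a < (K + 1) * a) by (apply Rmult_lt_compat_r; lra). lra.
Qed.

Lemma disj a w u1 v1 u2 v2 t k k' : 0 < a -> w <= u1 -> v1 <= u2 -> v2 <= w + a ->
  u1 <= t - IZR k * a < v1 -> u2 <= t - IZR k' * a < v2 -> False.
Proof.
  intros Ha H1 H2 H3 A B. destruct (Z_le_dec k k') as [e|e].
  - assert (C := IZR_mono_b k k' a Ha e). lra.
  - assert (C := IZR_mono_b k' (k - 1) a Ha ltac:(lia)). rewrite minus_IZR in C. lra.
Qed.

Lemma disj' a w u1 v1 u2 v2 t k k' :
  u1 <= t - IZR k * a < v1 -> u2 <= t - IZR k' * a < v2 ->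
  0 < a -> w <= u1 -> v1 <= u2 -> v2 <= w + a -> False.
Proof. intros A B Ha H1 H2 H3. exact (disj a w u1 v1 u2 v2 t k k' Ha H1 H2 H3 A B). Qed.

Ltac prep2 H a b c :=
  let Ha := fresh "Ha" in let Hab := fresh "Hab" in let Hbc := fresh "Hbc" in
  let H1 := fresh "Hc1" in let H2 := fresh "Hc2" in
  destruct H as [Ha [Hab [Hbc [H1 H2]]]];
  unfold c0, nfl in *;
  set (N := Int_part (c / b)) in *.

Lemma Rmap_sol a b c v t x : hyp a b c -> sol a b c v t x ->
  ((exists k, 0 <= t - IZR k * a < c0 b c + a - b) /\
     Rmap a b c t = t + IZR (Int_part (c / b) + 1) * b /\ x (Int_part (c / b) + 1)%Z = true) \/
  ((exists k, c0 b c <= t - IZR k * a < a) /\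
     Rmap a b c t = t + IZR (Int_part (c / b)) * b /\ x (Int_part (c / b)) = true).
Proof.
  intros H Hs. pose proof H as H'. unfold Rmap.
  destruct (excluded_middle_informative (in_per a 0 (c0 b c + a - b) t)) as [[k Hk]|Hn1].
  - left. split; [exists k; auto|]. split; [|eapply case_R1; eauto].
    rewrite plus_IZR. unfold nfl. simpl. ring.
  - destruct (excluded_middle_informative (in_per a (c0 b c + a - b) (c0 b c) t)) as [[k Hk]|Hn2].
    + exfalso. eapply case_R2; eauto.
    + destruct H' as [Ha _]. destruct (exists_period a 0 t Ha) as [k Hk].
      destruct (Rlt_le_dec (t - IZR k * a) (c0 b c + a - b)).
      { exfalso; apply Hn1; exists k; lra. }
      destruct (Rlt_le_dec (t - IZR k * a) (c0 b c)).
      { exfalso; apply Hn2; exists k; lra. }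
      right. split; [exists k; lra|]. split; [unfold nfl; ring|].
      apply (case_R3 a b c v t x k); auto; lra.
Qed.

Lemma Rtmap_sol a b c v t x : hyp a b c -> sol a b c v t x ->
  ((exists k, c - a <= t - IZR k * a < c - c0 b c) /\
     Rtmap a b c t = t + IZR (- Int_part (c / b)) * b /\ x (- Int_part (c / b))%Z = true) \/
  ((exists k, c - c0 b c + b - a <= t - IZR k * a < c) /\
     Rtmap a b c t = t + IZR (- (Int_part (c / b) + 1)) * b /\
     x (- (Int_part (c / b) + 1))%Z = true).
Proof.
  intros H Hs. pose proof H as H'. unfold Rtmap.
  destruct (excluded_middle_informative (in_per a (c - a) (c - c0 b c) t)) as [[k Hk]|Hn1].
  - left. split; [exists k; auto|]. split; [|eapply case_T1; eauto].
    rewrite opp_IZR. unfold nfl. ring.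
  - destruct (excluded_middle_informative (in_per a (c - c0 b c) (c - c0 b c + b - a) t)) as [[k Hk]|Hn2].
    + exfalso. eapply case_T2; eauto.
    + destruct H' as [Ha _]. destruct (exists_period a (c - a) t Ha) as [k Hk].
      destruct (Rlt_le_dec (t - IZR k * a) (c - c0 b c)).
      { exfalso; apply Hn1; exists k; lra. }
      destruct (Rlt_le_dec (t - IZR k * a) (c - c0 b c + b - a)).
      { exfalso; apply Hn2; exists k; lra. }
      right. split; [exists k; lra|]. split; [rewrite opp_IZR, plus_IZR; unfold nfl; simpl; ring|].
      apply (case_T3 a b c v t x k); auto; lra.
Qed.

Lemma Rtmap_after_R1 a b c t k : hyp a b c -> 0 <= t - IZR k * a < c0 b c + a - b ->
  Rtmap a b c (t + IZR (Int_part (c / b) + 1) * b) = t.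
Proof.
  intros H Hk. prep2 H a b c. rewrite plus_IZR in *. unfold Rtmap, c0, nfl. fold N.
  assert (Hk' : c - (c - IZR N * b) + b - a <= t + (IZR N + 1) * b - IZR (k + 1) * a < c)
    by (rewrite plus_IZR; lra).
  destruct (excluded_middle_informative _) as [[k1 Hk1]|_].
  { exfalso. apply (disj' a (c - a) _ _ _ _ _ k1 (k + 1) Hk1 Hk'); lra. }
  destruct (excluded_middle_informative _) as [[k1 Hk1]|_].
  { exfalso. apply (disj' a (c - a) _ _ _ _ _ k1 (k + 1) Hk1 Hk'); lra. }
  ring.
Qed.

Lemma Rtmap_after_R3 a b c t k : hyp a b c -> c0 b c <= t - IZR k * a < a ->
  Rtmap a b c (t + IZR (Int_part (c / b)) * b) = t.
Proof.
  intros H Hk. prep2 H a b c. unfold Rtmap, c0, nfl. fold N.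
  destruct (excluded_middle_informative _) as [_|Hn]; [ring|].
  exfalso. apply Hn. exists (k + 1)%Z. rewrite plus_IZR. lra.
Qed.

Lemma Rmap_after_T1 a b c t k : hyp a b c -> c - a <= t - IZR k * a < c - c0 b c ->
  Rmap a b c (t + IZR (- Int_part (c / b)) * b) = t.
Proof.
  intros H Hk. prep2 H a b c. rewrite opp_IZR in *. unfold Rmap, c0, nfl. fold N.
  assert (Hk' : c - IZR N * b <= t + - IZR N * b - IZR (k - 1) * a < a)
    by (rewrite minus_IZR; lra).
  destruct (excluded_middle_informative _) as [[k1 Hk1]|_].
  { exfalso. apply (disj' a 0 _ _ _ _ _ k1 (k - 1) Hk1 Hk'); lra. }
  destruct (excluded_middle_informative _) as [[k1 Hk1]|_].
  { exfalso. apply (disj' a 0 _ _ _ _ _ k1 (k - 1) Hk1 Hk'); lra. }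
  ring.
Qed.

Lemma Rmap_after_T3 a b c t k : hyp a b c -> c - c0 b c + b - a <= t - IZR k * a < c ->
  Rmap a b c (t + IZR (- (Int_part (c / b) + 1)) * b) = t.
Proof.
  intros H Hk. prep2 H a b c. rewrite opp_IZR, plus_IZR in *. unfold Rmap, c0, nfl. fold N.
  destruct (excluded_middle_informative _) as [_|Hn]; [ring|].
  exfalso. apply Hn. exists (k - 1)%Z. rewrite minus_IZR. lra.
Qed.

Fixpoint lsum {A : Type} (h : A -> R) (l : list A) : R :=
  match l with nil => 0 | a :: t => h a + lsum h t end.

Lemma lsum_app {A} (h : A -> R) l1 l2 : lsum h (l1 ++ l2) = lsum h l1 + lsum h l2.
Proof. induction l1; simpl; [ring|rewrite IHl1; ring]. Qed.

Lemma lsum_nn {A} (h : A -> R) l : (forall p, 0 <= h p) -> 0 <= lsum h l.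
Proof. intros H; induction l; simpl; [lra|specialize (H a); lra]. Qed.

Lemma lsum_mono {A} (h g : A -> R) l : (forall p, h p <= g p) -> lsum h l <= lsum g l.
Proof. intros H; induction l; simpl; [lra|specialize (H a); lra]. Qed.

Lemma lsum_remove_le {A} dec (h : A -> R) l a : (forall p, 0 <= h p) ->
  lsum h (remove dec a l) <= lsum h l.
Proof.
  intros H; induction l as [|b l IH]; simpl; [lra|].
  destruct (dec a b); simpl; specialize (H b); lra.
Qed.

Lemma lsum_remove_in {A} dec (h : A -> R) l a : (forall p, 0 <= h p) -> In a l ->
  h a + lsum h (remove dec a l) <= lsum h l.
Proof.
  intros H; induction l as [|b l IH]; simpl; [tauto|]. intros Hin.
  destruct (dec a b) as [e|e].
  - subst b. pose proof (lsum_remove_le dec h l a H). lra.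
  - simpl. destruct Hin as [e'|e']; [congruence|]. specialize (IH e'). lra.
Qed.

Lemma lsum_sub {A} (dec : forall x y : A, {x = y} + {x <> y}) (h : A -> R) l1 l2 :
  (forall p, 0 <= h p) -> NoDup l1 -> incl l1 l2 -> lsum h l1 <= lsum h l2.
Proof.
  intros H Hnd. revert l2. induction Hnd as [|a l1 Hna Hnd IH]; intros l2 Hinc; simpl.
  - apply lsum_nn; auto.
  - assert (Ha : In a l2) by (apply Hinc; left; auto).
    assert (Hi : incl l1 (remove dec a l2)).
    { intros y Hy. apply in_in_remove; [intro e; subst; contradiction|]. apply Hinc; right; auto. }
    specialize (IH _ Hi). pose proof (lsum_remove_in dec h l2 a H Ha). lra.
Qed.

Lemma lsum_seq (g : nat -> R) M : sum_f_R0 g M = lsum g (seq 0 (S M)).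
Proof.
  induction M.
  - simpl. ring.
  - rewrite tech5, IHM. rewrite (seq_S (S M)), lsum_app. simpl. ring.
Qed.

Lemma lsum_map {A B} (f : A -> B) (h : B -> R) l : lsum h (map f l) = lsum (fun x => h (f x)) l.
Proof. induction l; simpl; [reflexivity|rewrite IHl; reflexivity]. Qed.

Lemma lsum_prod (h : nat * nat -> R) L1 L2 :
  lsum h (list_prod L1 L2) = lsum (fun n => lsum (fun j => h (n, j)) L2) L1.
Proof.
  induction L1; simpl; [reflexivity|]. rewrite lsum_app, IHL1, lsum_map. reflexivity.
Qed.

Definition pdec : forall x y : nat * nat, {x = y} + {x <> y}.
Proof. decide equality; apply Nat.eq_dec. Defined.

Lemma double_sum_bound (W : nat * nat -> R) (Bn : nat -> R) X :
  (forall p, 0 <= W p) ->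
  (forall n J, sum_f_R0 (fun j => W (n, j)) J <= Bn n) ->
  (forall N, sum_f_R0 Bn N <= X) ->
  forall M, sum_f_R0 (fun q => W (Cantor.of_nat q)) M <= X.
Proof.
  intros Hnn Hin Hout M.
  rewrite lsum_seq. rewrite <- (lsum_map Cantor.of_nat W).
  apply Rle_trans with (lsum W (list_prod (seq 0 (S M)) (seq 0 (S M)))).
  - apply (lsum_sub pdec); auto.
    + apply NoDup_map_NoDup_ForallPairs; [|apply seq_NoDup].
      intros u v _ _ e. rewrite <- (Cantor.cancel_to_of u), <- (Cantor.cancel_to_of v), e. reflexivity.
    + intros [n j] Hp. apply in_map_iff in Hp. destruct Hp as [q [Hq Hs]].
      apply in_seq in Hs. pose proof (Cantor.to_nat_non_decreasing n j) as Hc.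
      rewrite <- Hq, Cantor.cancel_to_of in Hc.
      apply in_prod; apply in_seq; lia.
  - rewrite lsum_prod. rewrite <- lsum_seq.
    apply Rle_trans with (sum_f_R0 Bn M); [|apply Hout].
    apply sum_Rle. intros n _. rewrite <- lsum_seq. apply Hin.
Qed.

Lemma sum_pairs (g : nat -> R) M :
  sum_f_R0 g (S (2 * M)) = sum_f_R0 (fun q => g (2 * q)%nat + g (S (2 * q))) M.
Proof.
  induction M.
  - simpl. ring.
  - replace (S (2 * S M)) with (S (S (S (2 * M)))) by lia.
    rewrite (tech5 g (S (S (2 * M)))), (tech5 g (S (2 * M))), IHM, (tech5 _ M). replace (2 * S M)%nat with (S (S (2 * M))) by lia. ring.
Qed.

Lemma sum_nn_mono (g : nat -> R) M M' : (forall m, 0 <= g m) -> (M <= M')%nat ->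
  sum_f_R0 g M <= sum_f_R0 g M'.
Proof.
  intros H Hm. induction Hm; [lra|]. rewrite tech5. specialize (H (S m)). lra.
Qed.

Ltac mm := repeat match goal with
  | |- context [Rmin ?x ?y] => destruct (Rle_dec x y);
       [rewrite (Rmin_left x y) by lra | rewrite (Rmin_right x y) by lra]
  | |- context [Rmax ?x ?y] =>
       match x with context [Rmax _ _] => fail 1 | context [Rmin _ _] => fail 1 | _ =>
       match y with context [Rmax _ _] => fail 1 | context [Rmin _ _] => fail 1 | _ =>
       destruct (Rle_dec x y);
       [rewrite (Rmax_right x y) by lra | rewrite (Rmax_left x y) by lra] end end
  end.
Definition capl (l r p q : R) : R := Rmax 0 (Rmin r q - Rmax l p).

Lemma capl_nn l r p q : 0 <= capl l r p q.
Proof. unfold capl. apply Rmax_l. Qed.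

Lemma capl_add l r p q q' s' s : l <= r -> p <= q -> q <= q' -> q' <= s' -> s' <= s ->
  capl l r p q + capl l r q' s' <= capl l r p s.
Proof.
  intros. unfold capl. mm; lra.
Qed.

Lemma capl_le l r p q : l <= r -> capl l r p q <= r - l.
Proof.
  intros. unfold capl. mm; lra.
Qed.

Lemma capl_cover l r p q t : l <= t <= r -> p <= t <= q ->
  Rmax l p <= t <= Rmax l p + capl l r p q.
Proof.
  intros. unfold capl. mm; lra.
Qed.

Lemma period_sum l r B a u1 v1 u2 v2 J : l <= r -> 0 < a -> u1 <= v1 -> v1 <= u2 -> u2 <= v2 -> v2 <= u1 + a ->
  sum_f_R0 (fun j => capl l r (B + INR j * a + u1) (B + INR j * a + v1)
                    + capl l r (B + INR j * a + u2) (B + INR j * a + v2)) J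
  <= capl l r (B + u1) (B + INR J * a + u1 + a).
Proof.
  intros Hlr Ha H1 H2 H3 H4. induction J.
  - simpl. replace (B + 0 * a + u1) with (B + u1) by ring.
    replace (B + 0 * a + v1) with (B + v1) by ring.
    replace (B + 0 * a + u2) with (B + u2) by ring.
    replace (B + 0 * a + v2) with (B + v2) by ring.
    apply capl_add; lra.
  - rewrite tech5. rewrite S_INR.
    assert (A : capl l r (B + (INR J + 1) * a + u1) (B + (INR J + 1) * a + v1)
             + capl l r (B + (INR J + 1) * a + u2) (B + (INR J + 1) * a + v2)
             <= capl l r (B + INR J * a + u1 + a) (B + (INR J + 1) * a + u1 + a)).
    { replace (B + INR J * a + u1 + a) with (B + (INR J + 1) * a + u1) by ring.
      apply capl_add; lra. }
    assert (Hj := pos_INR J).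
    assert (C : capl l r (B + u1) (B + INR J * a + u1 + a)
              + capl l r (B + INR J * a + u1 + a) (B + (INR J + 1) * a + u1 + a)
              <= capl l r (B + u1) (B + (INR J + 1) * a + u1 + a)).
    { apply capl_add; nra. }
    lra.
Qed.

Definition Pb (a u1 : R) (l : nat -> R) (n j : nat) : R :=
  IZR (Int_part ((l n - u1) / a)) * a + INR j * a.

Definition wl (a u1 v1 u2 v2 : R) (l r : nat -> R) (m : nat) : R :=
  let nj := Cantor.of_nat (Nat.div2 m) in
  let P := Pb a u1 l (fst nj) (snd nj) in
  if Nat.even m then capl (l (fst nj)) (r (fst nj)) (P + u1) (P + v1)
  else capl (l (fst nj)) (r (fst nj)) (P + u2) (P + v2).

Definition lo (a u1 u2 al1 al2 : R) (l : nat -> R) (m : nat) : R :=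
  let nj := Cantor.of_nat (Nat.div2 m) in
  let P := Pb a u1 l (fst nj) (snd nj) in
  if Nat.even m then Rmax (l (fst nj)) (P + u1) + al1
  else Rmax (l (fst nj)) (P + u2) + al2.

Definition image_fn := image.

Lemma lm_mono (A B : R -> Prop) x : (forall t, A t -> B t) -> lm_le B x -> lm_le A x.
Proof.
  intros H HB eps He. destruct (HB eps He) as [l [r [H1 [H2 H3]]]].
  exists l, r. split; [auto|split; [|auto]]. intros t Ht. apply H2, H, Ht.
Qed.

Lemma pw a u1 v1 u2 v2 al1 al2 (f : R -> R) (F : R -> Prop) x :
  0 < a -> u1 <= v1 -> v1 <= u2 -> u2 <= v2 -> v2 <= u1 + a ->
  (forall t, F t -> exists k, (u1 <= t - IZR k * a < v1 /\ f t = t + al1) \/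
                              (u2 <= t - IZR k * a < v2 /\ f t = t + al2)) ->
  lm_le F x -> lm_le (image f F) x.
Proof.
  intros Ha H1 H2 H3 H4 Hpc HF eps He.
  destruct (HF eps He) as [l [r [Hlr [Hcov Hsum]]]].
  exists (lo a u1 u2 al1 al2 l), (fun m => lo a u1 u2 al1 al2 l m + wl a u1 v1 u2 v2 l r m).
  split; [|split].
  - intros m. pose proof (capl_nn). unfold wl.
    destruct (Nat.even m); specialize (H (l (fst (Cantor.of_nat (Nat.div2 m))))); 
    match goal with |- _ <= _ + capl ?A ?B ?C ?D => specialize (H B C D) end; lra.
  - intros y [t [Ht Hy]]. subst y.
    destruct (Hcov t Ht) as [n Hn].
    destruct (Hpc t Ht) as [k Hk].
    set (k0 := Int_part ((l n - u1) / a)).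
    destruct (base_Int_part ((l n - u1) / a)) as [B1 _]. fold k0 in B1.
    assert (B2 : IZR k0 * a <= l n - u1).
    { replace (l n - u1) with ((l n - u1) / a * a) by (field; lra).
      apply Rmult_le_compat_r; lra. }
    assert (Hlt : t - IZR k * a < u1 + a) by (destruct Hk as [[A _]|[A _]]; lra).
    assert (Hkk : (k0 <= k)%Z).
    { destruct (Z_le_dec k0 k) as [e|e]; auto.
      assert (C := IZR_mono_b k (k0 - 1) a Ha ltac:(lia)). rewrite minus_IZR in C. lra. }
    set (j := Z.to_nat (k - k0)).
    assert (HP : Pb a u1 l n j = IZR k * a).
    { unfold Pb. fold k0. unfold j. rewrite INR_IZR_INZ, Z2Nat.id by lia.
      rewrite minus_IZR. ring. }
    destruct Hk as [[A Hf]|[A Hf]].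
    + exists (2 * Cantor.to_nat (n, j))%nat.
      unfold lo, wl. rewrite Nat.div2_double, Nat.even_even, Cantor.cancel_of_to. simpl fst; simpl snd.
      rewrite HP, Hf. pose proof (capl_cover (l n) (r n) (IZR k * a + u1) (IZR k * a + v1) t Hn).
      lra.
    + exists (S (2 * Cantor.to_nat (n, j)))%nat.
      unfold lo, wl. rewrite Nat.div2_succ_double, Cantor.cancel_of_to.
      replace (Nat.even (S (2 * Cantor.to_nat (n, j)))) with false
        by (rewrite Nat.even_succ, Nat.odd_mul; reflexivity).
      simpl fst; simpl snd.
      rewrite HP, Hf. pose proof (capl_cover (l n) (r n) (IZR k * a + u2) (IZR k * a + v2) t Hn).
      lra.
  - intros M.
    set (g := fun m => lo a u1 u2 al1 al2 l m + wl a u1 v1 u2 v2 l r m - lo a u1 u2 al1 al2 l m).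
    assert (Hg : forall m, g m = wl a u1 v1 u2 v2 l r m) by (intros; unfold g; ring).
    assert (Hgn : forall m, 0 <= g m) by (intros m; rewrite Hg; unfold wl; destruct (Nat.even m); apply capl_nn).
    apply Rle_trans with (sum_f_R0 g (S (2 * M))).
    { apply sum_nn_mono; auto; lia. }
    rewrite sum_pairs.
    set (W := fun p : nat * nat =>
      capl (l (fst p)) (r (fst p)) (Pb a u1 l (fst p) (snd p) + u1) (Pb a u1 l (fst p) (snd p) + v1)
    + capl (l (fst p)) (r (fst p)) (Pb a u1 l (fst p) (snd p) + u2) (Pb a u1 l (fst p) (snd p) + v2)).
    apply Rle_trans with (sum_f_R0 (fun q => W (Cantor.of_nat q)) M).
    { right. apply sum_eq. intros q _. rewrite !Hg. unfold wl, W.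
      rewrite Nat.div2_double, Nat.div2_succ_double, Nat.even_even.
      replace (Nat.even (S (2 * q))) with false by (rewrite Nat.even_succ, Nat.odd_mul; reflexivity).
      reflexivity. }
    apply (double_sum_bound W (fun n => r n - l n) (x + eps)).
    + intros p. unfold W. pose proof (capl_nn (l (fst p)) (r (fst p))). 
      specialize (H (Pb a u1 l (fst p) (snd p) + u1) (Pb a u1 l (fst p) (snd p) + v1)) as A.
      specialize (H (Pb a u1 l (fst p) (snd p) + u2) (Pb a u1 l (fst p) (snd p) + v2)). lra.
    + intros n J. unfold W, Pb. simpl fst; simpl snd.
      eapply Rle_trans; [apply (period_sum (l n) (r n) (IZR (Int_part ((l n - u1) / a)) * a) a u1 v1 u2 v2 J); auto|].
      apply capl_le; auto.
    + exact Hsum.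
Qed.

Lemma img_R a b c v : hyp a b c ->
  set_eq (image (Rmap a b c) (fun t => solvable a b c t v)) (fun t => solvable a b c t v).
Proof.
  intros H y. assert (Hb : 0 < b) by (destruct H as [? [? _]]; lra). split.
  - intros [t [[x Hx] <-]].
    destruct (Rmap_sol a b c v t x H Hx) as [[_ [E Hj]]|[_ [E Hj]]]; rewrite E;
      eexists; apply sol_shift; eauto.
  - intros [x Hx].
    destruct (Rtmap_sol a b c v y x H Hx) as [[[k Hk] [E Hj]]|[[k Hk] [E Hj]]];
      exists (Rtmap a b c y); (split; [rewrite E; eexists; apply sol_shift; eauto|]); rewrite E.
    + apply (Rmap_after_T1 a b c y k H Hk).
    + apply (Rmap_after_T3 a b c y k H Hk).
Qed.

Lemma img_Rt a b c v : hyp a b c ->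
  set_eq (image (Rtmap a b c) (fun t => solvable a b c t v)) (fun t => solvable a b c t v).
Proof.
  intros H y. assert (Hb : 0 < b) by (destruct H as [? [? _]]; lra). split.
  - intros [t [[x Hx] <-]].
    destruct (Rtmap_sol a b c v t x H Hx) as [[_ [E Hj]]|[_ [E Hj]]]; rewrite E;
      eexists; apply sol_shift; eauto.
  - intros [x Hx].
    destruct (Rmap_sol a b c v y x H Hx) as [[[k Hk] [E Hj]]|[[k Hk] [E Hj]]];
      exists (Rmap a b c y); (split; [rewrite E; eexists; apply sol_shift; eauto|]); rewrite E.
    + apply (Rtmap_after_R1 a b c y k H Hk).
    + apply (Rtmap_after_R3 a b c y k H Hk).
Qed.

Lemma inv_both a b c v t : hyp a b c -> solvable a b c t v ->
  Rmap a b c (Rtmap a b c t) = t /\ Rtmap a b c (Rmap a b c t) = t.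
Proof.
  intros H [x Hx]. split.
  - destruct (Rtmap_sol a b c v t x H Hx) as [[[k Hk] [E _]]|[[k Hk] [E _]]]; rewrite E.
    + apply (Rmap_after_T1 a b c t k H Hk).
    + apply (Rmap_after_T3 a b c t k H Hk).
  - destruct (Rmap_sol a b c v t x H Hx) as [[[k Hk] [E _]]|[[k Hk] [E _]]]; rewrite E.
    + apply (Rtmap_after_R1 a b c t k H Hk).
    + apply (Rtmap_after_R3 a b c t k H Hk).
Qed.

Lemma pw_R a b c v (E : R -> Prop) x : hyp a b c -> (forall t, E t -> solvable a b c t v) ->
  lm_le E x -> lm_le (image (Rmap a b c) E) x.
Proof.
  intros H HE. pose proof H as H'. destruct H' as [Ha [Hab [Hbc [H1 H2]]]].
  apply (pw a 0 (c0 b c + a - b) (c0 b c) a (IZR (Int_part (c / b) + 1) * b)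
           (IZR (Int_part (c / b)) * b)); try lra.
  intros t Ht. destruct (HE t Ht) as [x0 Hx].
  destruct (Rmap_sol a b c v t x0 H Hx) as [[[k Hk] [Ee _]]|[[k Hk] [Ee _]]]; exists k; auto.
Qed.

Lemma pw_Rt a b c v (E : R -> Prop) x : hyp a b c -> (forall t, E t -> solvable a b c t v) ->
  lm_le E x -> lm_le (image (Rtmap a b c) E) x.
Proof.
  intros H HE. pose proof H as H'. destruct H' as [Ha [Hab [Hbc [H1 H2]]]].
  apply (pw a (c - a) (c - c0 b c) (c - c0 b c + b - a) c (IZR (- Int_part (c / b)) * b)
           (IZR (- (Int_part (c / b) + 1)) * b)); try lra.
  intros t Ht. destruct (HE t Ht) as [x0 Hx].
  destruct (Rtmap_sol a b c v t x0 H Hx) as [[[k Hk] [Ee _]]|[[k Hk] [Ee _]]]; exists k; auto.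
Qed.

Lemma meas_part a b c v (E : R -> Prop) : hyp a b c -> (forall t, E t -> solvable a b c t v) ->
  lm_eq (image (Rmap a b c) E) E /\ lm_eq (image (Rtmap a b c) E) E.
Proof.
  intros H HE.
  assert (HRE : forall t, image (Rmap a b c) E t -> solvable a b c t v).
  { intros y Hy. apply (img_R a b c v H y). destruct Hy as [t [Ht <-]]. exists t; auto. }
  assert (HTE : forall t, image (Rtmap a b c) E t -> solvable a b c t v).
  { intros y Hy. apply (img_Rt a b c v H y). destruct Hy as [t [Ht <-]]. exists t; auto. }
  split; intros x; split.
  - intros Hl. apply (pw_Rt a b c v _ x H HRE) in Hl.
    eapply lm_mono; [|exact Hl]. intros t Ht.
    exists (Rmap a b c t). split; [exists t; auto|]. apply (inv_both a b c v t H (HE t Ht)).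
  - apply (pw_R a b c v E x H HE).
  - intros Hl. apply (pw_R a b c v _ x H HTE) in Hl.
    eapply lm_mono; [|exact Hl]. intros t Ht.
    exists (Rtmap a b c t). split; [exists t; auto|]. apply (inv_both a b c v t H (HE t Ht)).
  - apply (pw_Rt a b c v E x H HE).
Qed.

Theorem proposition3p8 (a b c : R) :
  0 < a -> a < b -> b < c ->
  b - a < c0 b c -> c0 b c < a ->
  (* (i) *)
  (set_eq (image (Rmap a b c) (Dset a b c)) (Dset a b c) /\
   set_eq (image (Rtmap a b c) (Dset a b c)) (Dset a b c) /\
   set_eq (image (Rmap a b c) (Sset a b c)) (Sset a b c) /\
   set_eq (image (Rtmap a b c) (Sset a b c)) (Sset a b c)) /\
  (* (ii) *)
  (forall t, Sset a b c t ->
     Rmap a b c (Rtmap a b c t) = t /\ Rtmap a b c (Rmap a b c t) = t) /\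
  (forall t, Dset a b c t ->
     Rmap a b c (Rtmap a b c t) = t /\ Rtmap a b c (Rmap a b c t) = t) /\
  (* (iii) *)
  (forall E : R -> Prop, (forall t, E t -> Sset a b c t) -> lmeasurable E ->
     lm_eq (image (Rmap a b c) E) E /\ lm_eq (image (Rtmap a b c) E) E) /\
  (forall E : R -> Prop, (forall t, E t -> Dset a b c t) -> lmeasurable E ->
     lm_eq (image (Rmap a b c) E) E /\ lm_eq (image (Rtmap a b c) E) E).
Proof.
  intros Ha Hab Hbc H1 H2.
  assert (H : hyp a b c) by (repeat split; auto).
  split; [|split; [|split; [|split]]].
  - split; [|split; [|split]].
    + exact (img_R a b c 2 H).
    + exact (img_Rt a b c 2 H).
    + exact (img_R a b c 1 H).
    + exact (img_Rt a b c 1 H).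
  - intros t Ht. exact (inv_both a b c 1 t H Ht).
  - intros t Ht. exact (inv_both a b c 2 t H Ht).
  - intros E HE _. exact (meas_part a b c 1 E H HE).
  - intros E HE _. exact (meas_part a b c 2 E H HE).
Qed.
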